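(* For every $(\zeta_1,\zeta_2,\zeta_3)\in\mathbb{R}^3$ satisfying $0<\zeta_3<\zeta_2<\zeta_1$, there exists a unique choice of $(\zeta_1,\alpha,k)\in(0,\infty)\times(0,K(k))\times(0,1)$ in the transformation $$\zeta_1=\zeta_1,\qquad \zeta_2=\zeta_1\,\mathrm{dn}(2\alpha),\qquad \zeta_3=\zeta_1\,\mathrm{cn}(2\alpha),$$ (Jacobi functions of modulus $k$), which also implies $\nu:=\sqrt{\zeta_1^2-\zeta_3^2}=\zeta_1\,\mathrm{sn}(2\alpha)$. For $\zeta_1=1$, the bounded periodic profile $\phi$ (the solution of $\phi''-2\phi^3+c\phi=b$ with $b=4\zeta_1\zeta_2\zeta_3$, $c=2(\zeta_1^2+\zeta_2^2+\zeta_3^2)$ described in the context) can be uniquely expressed by $$\phi(x)=(\mathrm{dn}(2\alpha)+\mathrm{cn}(2\alpha))\frac{1+k^2\mathrm{sn}^2(\alpha)\,\mathrm{sn}^2(\mathrm{sn}(2\alpha)x)}{1-k^2\mathrm{sn}^2(\alpha)\,\mathrm{sn}^2(\mathrm{sn}(2\alpha)x)}-1,$$ where $\alpha\in(0,K)$ and $k\in(0,1)$ are two arbitrary parameters.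
   Context: $K(k)$ is the complete elliptic integral of the first kind and $\mathrm{sn},\mathrm{cn},\mathrm{dn}$ are Jacobi elliptic functions of modulus $k$. For $0<\zeta_3<\zeta_2<\zeta_1$, the profile $\phi$ referred to is the bounded periodic solution of $\phi''-2\phi^3+c\phi=b$, $(\phi')^2=\phi^4-c\phi^2+2b\phi+2d$, with $b=4\zeta_1\zeta_2\zeta_3$, $c=2(\zeta_1^2+\zeta_2^2+\zeta_3^2)$, $d=\tfrac12(\zeta_1^4+\zeta_2^4+\zeta_3^4)-\zeta_1^2\zeta_2^2-\zeta_1^2\zeta_3^2-\zeta_2^2\zeta_3^2$, given by $$\phi(x)=\frac{2(\zeta_1+\zeta_3)(\zeta_2+\zeta_3)}{(\zeta_1+\zeta_3)-(\zeta_1-\zeta_2)\mathrm{sn}^2(\nu x)}-\zeta_1-\zeta_2-\zeta_3,$$ with $\nu=\sqrt{\zeta_1^2-\zeta_3^2}$ and modulus $k=\sqrt{(\zeta_1^2-\zeta_2^2)/(\zeta_1^2-\zeta_3^2)}$, and $\alpha\in(0,K)$ defined by $\mathrm{sn}(\alpha)=\sqrt{(\zeta_1-\zeta_3)/(\zeta_1+\zeta_2)}$. *)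

(* Defs.v *)
From Stdlib Require Import Reals Lra ClassicalEpsilon.
From Coquelicot Require Import Coquelicot.
Open Scope R_scope.

Definition ellF (k phi : R) : R :=
  RInt (fun t => / sqrt (1 - k ^ 2 * (sin t) ^ 2)) 0 phi.

Definition ellK (k : R) : R := ellF k (PI / 2).

(* Jacobi amplitude: the inverse of phi |-> F(phi,k)
   (F(.,k) is a strictly increasing bijection of R for 0 <= k < 1). *)
Definition am (k u : R) : R :=
  epsilon (inhabits 0) (fun phi => ellF k phi = u).

Definition sn (k u : R) : R := sin (am k u).
Definition cn (k u : R) : R := cos (am k u).
Definition dn (k u : R) : R := sqrt (1 - k ^ 2 * (sn k u) ^ 2).

Definition prof_nu (z1 z3 : R) : R := sqrt (z1 ^ 2 - z3 ^ 2).
Definition prof_k (z1 z2 z3 : R) : R :=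
  sqrt ((z1 ^ 2 - z2 ^ 2) / (z1 ^ 2 - z3 ^ 2)).
Definition profile (z1 z2 z3 x : R) : R :=
  2 * (z1 + z3) * (z2 + z3)
    / ((z1 + z3) - (z1 - z2) * (sn (prof_k z1 z2 z3) (prof_nu z1 z3 * x)) ^ 2)
  - z1 - z2 - z3.

(* Main.v *)
Require Import Defs.
From Stdlib Require Import Reals Lra Psatz ClassicalEpsilon.
From Coquelicot Require Import Coquelicot.
Open Scope R_scope.

Definition fk (k t : R) : R := / sqrt (1 - k ^ 2 * (sin t) ^ 2).

Lemma pos_rad k t : 0 <= k < 1 -> 0 < 1 - k ^ 2 * (sin t) ^ 2.
Proof.
  intros [h0 h1]. pose proof (SIN_bound t) as [s0 s1].
  assert (0 <= sin t ^ 2 <= 1) by nra. nra.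
Qed.

Lemma fk_pos k t : 0 <= k < 1 -> 0 < fk k t.
Proof. intros h; unfold fk. apply Rinv_0_lt_compat, sqrt_lt_R0, pos_rad; auto. Qed.

Lemma fk_ge1 k t : 0 <= k < 1 -> 1 <= fk k t.
Proof.
  intros h; unfold fk. pose proof (pos_rad k t h).
  assert (sqrt (1 - k ^ 2 * sin t ^ 2) <= 1).
  { rewrite <- sqrt_1 at 2. apply sqrt_le_1_alt. assert (0 <= k^2 * sin t ^2) by (apply Rmult_le_pos; nra). lra. }
  pose proof (sqrt_lt_R0 _ H).
  rewrite <- Rinv_1 at 1. apply Rinv_le_contravar; lra.
Qed.

Lemma fk_cont k t : 0 <= k < 1 -> continuous (fk k) t.
Proof.
  intros h. apply (@ex_derive_continuous R_AbsRing R_NormedModule). unfold fk.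
  pose proof (pos_rad k t h). pose proof (sqrt_lt_R0 _ H).
  auto_derive. replace (1 + - (k * (k * 1) * (sin t * (sin t * 1)))) with (1 - k ^ 2 * sin t ^ 2) by ring. repeat split; auto; lra.
Qed.

Lemma ellF_eq k x : ellF k x = RInt (fk k) 0 x.
Proof. reflexivity. Qed.

Lemma ellF_derive k x : 0 <= k < 1 -> is_derive (ellF k) x (fk k x).
Proof.
  intros h. apply (is_derive_RInt (fk k) (ellF k) 0 x).
  - apply filter_forall. intros b. change (ellF k b) with (RInt (fk k) 0 b). apply (@RInt_correct R_CompleteNormedModule).
    apply (@ex_RInt_continuous R_CompleteNormedModule). intros; apply fk_cont; auto.
  - apply fk_cont; auto.
Qed.

Lemma ellF_cont k x : 0 <= k < 1 -> continuous (ellF k) x.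
Proof. intros h. apply (@ex_derive_continuous R_AbsRing R_NormedModule). eexists. apply ellF_derive; auto. Qed.

Lemma ellF_incr k x y : 0 <= k < 1 -> x < y -> ellF k x < ellF k y.
Proof.
  intros h hxy. apply (incr_function (ellF k) m_infty p_infty (fk k)); simpl; auto.
  - intros; apply ellF_derive; auto.
  - intros; apply fk_pos; auto.
Qed.

Lemma ellF_inj k x y : 0 <= k < 1 -> ellF k x = ellF k y -> x = y.
Proof.
  intros h e. destruct (Rtotal_order x y) as [l|[l|l]]; auto.
  - apply (ellF_incr k) in l; auto; lra.
  - apply (ellF_incr k) in l; auto; lra.
Qed.

Lemma ellF_0 k : ellF k 0 = 0.
Proof. unfold ellF. apply (@RInt_point R_CompleteNormedModule). Qed.

Lemma ellF_ge k x : 0 <= k < 1 -> 0 <= x -> x <= ellF k x.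
Proof.
  intros h hx. rewrite ellF_eq.
  assert (RInt (fun _ => 1) 0 x <= RInt (fk k) 0 x).
  { apply RInt_le; auto.
    - apply ex_RInt_const.
    - apply (@ex_RInt_continuous R_CompleteNormedModule). intros; apply fk_cont; auto.
    - intros; apply fk_ge1; auto. }
  rewrite RInt_const in H. unfold scal in H; simpl in H.
  unfold mult in H; simpl in H. lra.
Qed.

Lemma ellF_surj k u : 0 <= k < 1 -> 0 <= u -> exists p, ellF k p = u.
Proof.
  intros h hu.
  assert (continuity (ellF k)).
  { intros x. apply continuity_pt_filterlim. apply ellF_cont; auto. }
  destruct (IVT_gen (ellF k) 0 u u H) as [p [_ hp]].
  - rewrite ellF_0. pose proof (ellF_ge k u h hu).
    rewrite Rmin_left by lra. rewrite Rmax_right by lra. lra.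
  - exists p; auto.
Qed.

Lemma am_spec k u : 0 <= k < 1 -> 0 <= u -> ellF k (am k u) = u.
Proof.
  intros h hu. unfold am. apply epsilon_spec. apply ellF_surj; auto.
Qed.

Lemma am_eq k u p : 0 <= k < 1 -> ellF k p = u -> 0 <= u -> am k u = p.
Proof.
  intros h e hu. apply (ellF_inj k); auto. rewrite am_spec; auto.
Qed.

Definition psi (k p : R) : R := 2 * atan (sin p * sqrt (1 - k ^ 2 * sin p ^ 2) / cos p).

Lemma psi_derive k x : 0 <= k < 1 -> 0 < cos x ->
  is_derive (psi k) x
   (let s := sin x in let c := cos x in let d := sqrt (1 - k ^ 2 * sin x ^ 2) in
    2 * (d ^ 2 - k ^ 2 * s ^ 2 * c ^ 2) / (d * (c ^ 2 + s ^ 2 * d ^ 2))).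
Proof.
  intros h hc. unfold psi. pose proof (pos_rad k x h). pose proof (sqrt_lt_R0 _ H).
  auto_derive.
  - replace (1 + - (k * (k * 1) * (sin x * (sin x * 1)))) with (1 - k ^ 2 * sin x ^ 2) by ring.
    repeat split; auto; lra.
  - replace (1 + - (k * (k * 1) * (sin x * (sin x * 1)))) with (1 - k ^ 2 * sin x ^ 2) by ring.
    pose proof (sin2_cos2 x) as sc. unfold Rsqr in sc.
    set (d := sqrt (1 - k ^ 2 * sin x ^ 2)) in *.
    set (s := sin x) in *. set (c := cos x) in *.
    replace (d ^ 2 - k ^ 2 * s ^ 2 * c ^ 2) with (d ^ 2 * (s * s + c * c) - k ^ 2 * s ^ 2 * c ^ 2) by (rewrite sc; ring).
    assert (0 < c ^ 2 + s ^ 2 * d ^ 2) by nra.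
    assert (0 < 1 + s * d * / c * (s * d * / c * 1)).
    { assert (0 <= s * d * / c * (s * d * / c * 1)) by (replace (s * d * / c * (s * d * / c * 1)) with ((s*d*/c)^2) by ring; apply pow2_ge_0). lra. }
    field. repeat split; try lra.
Qed.

Lemma psi_trig k x : 0 <= k < 1 -> 0 < cos x ->
  let s := sin x in let c := cos x in let d := sqrt (1 - k ^ 2 * sin x ^ 2) in
  sin (psi k x) = 2 * s * c * d / (c ^ 2 + s ^ 2 * d ^ 2) /\
  cos (psi k x) = (c ^ 2 - s ^ 2 * d ^ 2) / (c ^ 2 + s ^ 2 * d ^ 2) /\
  sqrt (1 - k ^ 2 * sin (psi k x) ^ 2) = (d ^ 2 - k ^ 2 * s ^ 2 * c ^ 2) / (c ^ 2 + s ^ 2 * d ^ 2).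
Proof.
  intros h hc s c d.
  assert (H: 0 < 1 - k^2*s^2) by (apply pos_rad; auto).
  assert (H0: 0 < d) by (apply sqrt_lt_R0; exact H).
  assert (hd: d^2 = 1 - k^2*s^2) by (apply pow2_sqrt; lra).
  assert (sc: s*s + c*c = 1) by (pose proof (sin2_cos2 x) as e; unfold Rsqr in e; exact e).
  assert (hc0 : 0 < c) by exact hc.
  change (psi k x) with (2 * atan (s * d / c)).
  clearbody s c d.
  set (t := s * d / c).
  assert (ht : 0 < 1 + t²) by (unfold Rsqr; nra).
  pose proof (sqrt_lt_R0 _ ht). pose proof (sqrt_sqrt _ (Rlt_le _ _ ht)).
  assert (sin (2 * atan t) = 2 * t / (1 + t²)).
  { rewrite sin_2a, sin_atan, cos_atan. set (q := sqrt (1 + t²)) in *. rewrite <- H2. field. lra. }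
  assert (cos (2 * atan t) = (1 - t²) / (1 + t²)).
  { rewrite cos_2a_cos, cos_atan. set (q := sqrt (1 + t²)) in *. replace (1 - t²) with (2 - (1 + t²)) by ring. rewrite <- H2. field. lra. }
  assert (hD : 0 < c ^ 2 + s ^ 2 * d ^ 2) by nra.
  assert (e1 : sin (2 * atan t) = 2 * s * c * d / (c ^ 2 + s ^ 2 * d ^ 2)).
  { rewrite H3. unfold t, Rsqr. field. split; [replace ((s*d)^2) with (s^2*d^2) by ring; lra | lra]. }
  assert (e2 : cos (2 * atan t) = (c ^ 2 - s ^ 2 * d ^ 2) / (c ^ 2 + s ^ 2 * d ^ 2)).
  { rewrite H4. unfold t, Rsqr. field. split; [replace ((s*d)^2) with (s^2*d^2) by ring; lra | lra]. }
  split; [exact e1|split; [exact e2|]].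
  rewrite e1.
  assert (hN : 0 < d ^ 2 - k ^ 2 * s ^ 2 * c ^ 2).
  { rewrite hd. destruct h. assert (0 <= s ^ 2 <= 1) by nra.
    assert (s^2 * (1 + c^2) <= 1) by nra. assert (k^2 < 1) by nra.
    assert (k ^ 2 * (s ^ 2 * (1 + c ^ 2)) < 1). 
    { destruct (Req_dec k 0). subst; nra. assert (0 < k^2) by nra. nra. }
    nra. }
  rewrite <- (sqrt_pow2 ((d ^ 2 - k ^ 2 * s ^ 2 * c ^ 2) / (c ^ 2 + s ^ 2 * d ^ 2))).
  2: { apply Rlt_le, Rdiv_lt_0_compat; auto. }
  f_equal.
  assert (hc2 : c^2 = 1 - s^2) by nra.
  assert (E : (c^2 + s^2*d^2)^2 - 4*k^2*s^2*c^2*d^2 = (d^2 - k^2*s^2*c^2)^2).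
  { rewrite hd, hc2. ring. }
  replace (1 - k^2*(2*s*c*d/(c^2 + s^2*d^2))^2) with (((c^2 + s^2*d^2)^2 - 4*k^2*s^2*c^2*d^2)/(c^2 + s^2*d^2)^2) by (field; lra).
  rewrite E. field. lra.
Qed.

Lemma h_derive k x : 0 <= k < 1 -> 0 < cos x ->
  is_derive (fun y => ellF k (psi k y) - 2 * ellF k y) x 0.
Proof.
  intros h hc.
  pose proof (psi_derive k x h hc) as dp.
  pose proof (psi_trig k x h hc) as [_ [_ e3]]. cbv zeta in dp, e3.
  set (s := sin x) in *. set (c := cos x) in *.
  set (d := sqrt (1 - k ^ 2 * s ^ 2)) in *.
  assert (H: 0 < 1 - k^2*s^2) by (apply pos_rad; auto).
  assert (H0: 0 < d) by (apply sqrt_lt_R0; exact H).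
  assert (hd: d^2 = 1 - k^2*s^2) by (apply pow2_sqrt; lra).
  assert (sc: s*s + c*c = 1) by (pose proof (sin2_cos2 x) as e; unfold Rsqr in e; exact e).
  assert (hc0 : 0 < c) by exact hc.
  assert (hD : 0 < c ^ 2 + s ^ 2 * d ^ 2) by nra.
  assert (hq : 0 < (d ^ 2 - k ^ 2 * s ^ 2 * c ^ 2) / (c ^ 2 + s ^ 2 * d ^ 2)).
  { rewrite <- e3. apply sqrt_lt_R0, pos_rad; auto. }
  assert (hN : 0 < d ^ 2 - k ^ 2 * s ^ 2 * c ^ 2).
  { replace (d ^ 2 - k ^ 2 * s ^ 2 * c ^ 2) with ((d ^ 2 - k ^ 2 * s ^ 2 * c ^ 2) / (c ^ 2 + s ^ 2 * d ^ 2) * (c ^ 2 + s ^ 2 * d ^ 2)) by (field; lra).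
    apply Rmult_lt_0_compat; lra. }
  evar (df : R).
  assert (is_derive (fun y => ellF k (psi k y) - 2 * ellF k y) x df).
  { apply (@is_derive_minus R_AbsRing R_NormedModule).
    - apply (is_derive_comp (ellF k) (psi k)).
      + apply ellF_derive; auto.
      + exact dp.
    - apply is_derive_scal. apply ellF_derive; auto. }
  replace 0 with df; auto. unfold df. unfold fk. rewrite e3. fold s d. simpl.
  unfold mult, scal, minus, plus, opp; simpl. unfold mult; simpl. field. lra.
Qed.

Lemma psi_0 k : psi k 0 = 0.
Proof. unfold psi. rewrite sin_0, cos_0. replace (0 * sqrt (1 - k ^ 2 * 0 ^ 2) / 1) with 0 by field. rewrite atan_0. ring. Qed.

Lemma dbl k p : 0 <= k < 1 -> 0 <= p < PI / 2 -> ellF k (psi k p) = 2 * ellF k p.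
Proof.
  intros h hp.
  set (g := fun y => ellF k (psi k y) - 2 * ellF k y).
  assert (hcos : forall y, 0 <= y <= p -> 0 < cos y).
  { intros y hy. apply cos_gt_0; pose proof PI_RGT_0; lra. }
  destruct (MVT_gen g 0 p (fun _ => 0)) as [c [_ hc]].
  - intros y hy. rewrite Rmin_left in hy by lra. rewrite Rmax_right in hy by lra.
    apply h_derive; auto. apply hcos; lra.
  - intros y hy. rewrite Rmin_left in hy by lra. rewrite Rmax_right in hy by lra.
    apply continuity_pt_filterlim.
    apply (@ex_derive_continuous R_AbsRing R_NormedModule). eexists. apply h_derive; auto.
  - unfold g in hc. rewrite psi_0, ellF_0 in hc. lra.
Qed.

Lemma ellF_nonneg k x : 0 <= k < 1 -> 0 <= x -> 0 <= ellF k x.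
Proof. intros h hx. pose proof (ellF_ge k x h hx). lra. Qed.

Lemma key k a : 0 <= k < 1 -> 0 < a < ellK k ->
  0 < am k a < PI / 2 /\ am k (2 * a) = psi k (am k a) /\ 0 < am k (2 * a) < PI.
Proof.
  intros h ha. unfold ellK in ha.
  assert (e : ellF k (am k a) = a) by (apply am_spec; auto; lra).
  assert (hp : 0 < am k a < PI / 2).
  { split.
    - destruct (Rle_or_lt (am k a) 0) as [l|l]; auto.
      destruct (Req_dec (am k a) 0) as [z|z].
      + rewrite z, ellF_0 in e. lra.
      + assert (ellF k (am k a) < ellF k 0) by (apply ellF_incr; auto; lra). rewrite ellF_0 in H; lra.
    - destruct (Rle_or_lt (PI/2) (am k a)) as [l|l]; auto.
      destruct (Req_dec (am k a) (PI/2)) as [z|z].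
      + rewrite z in e. lra.
      + assert (ellF k (PI/2) < ellF k (am k a)) by (apply ellF_incr; auto; lra). lra. }
  assert (eq : am k (2 * a) = psi k (am k a)).
  { apply am_eq; auto; try lra. rewrite dbl; auto; lra. }
  split; auto. split; auto. rewrite eq. unfold psi.
  set (p := am k a) in *.
  assert (0 < cos p) by (apply cos_gt_0; lra).
  assert (0 < sin p) by (apply sin_gt_0; lra).
  assert (0 < sqrt (1 - k ^ 2 * sin p ^ 2)) by (apply sqrt_lt_R0, pos_rad; auto).
  assert (0 < sin p * sqrt (1 - k ^ 2 * sin p ^ 2) / cos p) by (apply Rdiv_lt_0_compat; auto; apply Rmult_lt_0_compat; auto).
  pose proof (atan_increasing _ _ H2). rewrite atan_0 in H3.
  pose proof (atan_bound (sin p * sqrt (1 - k ^ 2 * sin p ^ 2) / cos p)). lra.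
Qed.

Lemma key2 k a : 0 <= k < 1 -> 0 < a < ellK k ->
  0 < sn k (2 * a) /\ k ^ 2 * sn k a ^ 2 * (1 + cn k (2 * a)) = 1 - dn k (2 * a).
Proof.
  intros h ha. destruct (key k a h ha) as [hp [eq hq]].
  split. { unfold sn. apply sin_gt_0; lra. }
  unfold dn, sn, cn. rewrite eq.
  set (p := am k a) in *.
  assert (hc : 0 < cos p) by (apply cos_gt_0; lra).
  destruct (psi_trig k p h hc) as [e1 [e2 e3]].
  rewrite e2, e3.
  set (s := sin p) in *. set (c := cos p) in *.
  set (d := sqrt (1 - k ^ 2 * s ^ 2)) in *.
  assert (H: 0 < 1 - k^2*s^2) by (apply pos_rad; auto).
  assert (H0: 0 < d) by (apply sqrt_lt_R0; exact H).
  assert (hd: d^2 = 1 - k^2*s^2) by (apply pow2_sqrt; lra).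
  assert (sc: s*s + c*c = 1) by (pose proof (sin2_cos2 p) as e; unfold Rsqr in e; exact e).
  assert (hD : 0 < c ^ 2 + s ^ 2 * d ^ 2) by nra.
  apply (Rmult_eq_reg_r (c ^ 2 + s ^ 2 * d ^ 2)); [|lra].
  field_simplify; try lra.
  replace (c^2) with (1 - s^2) by nra. rewrite hd. ring.
Qed.

Lemma sn_cn k u : sn k u ^ 2 + cn k u ^ 2 = 1.
Proof. unfold sn, cn. pose proof (sin2_cos2 (am k u)). unfold Rsqr in H. lra. Qed.

Lemma part2 z1 z2 z3 a k : 0 < z3 -> z3 < z2 -> z2 < z1 ->
     0 < k < 1 -> 0 < a < ellK k ->
     z2 = z1 * dn k (2 * a) -> z3 = z1 * cn k (2 * a) ->
     sqrt (z1 ^ 2 - z3 ^ 2) = z1 * sn k (2 * a).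
Proof.
  intros h3 h32 h21 hk ha e2 e3.
  destruct (key2 k a ltac:(lra) ha) as [hs _].
  pose proof (sn_cn k (2 * a)).
  rewrite e3. replace (z1 ^ 2 - (z1 * cn k (2 * a)) ^ 2) with ((z1 * sn k (2 * a)) ^ 2) by nra.
  apply sqrt_pow2. apply Rmult_le_pos; lra.
Qed.

Lemma part3 z2 z3 a k : 0 < z3 -> z3 < z2 -> z2 < 1 ->
     0 < k < 1 -> 0 < a < ellK k ->
     z2 = dn k (2 * a) -> z3 = cn k (2 * a) ->
     forall x : R,
       profile 1 z2 z3 x =
       (dn k (2 * a) + cn k (2 * a)) *
         ((1 + k ^ 2 * (sn k a) ^ 2 * (sn k (sn k (2 * a) * x)) ^ 2) /
          (1 - k ^ 2 * (sn k a) ^ 2 * (sn k (sn k (2 * a) * x)) ^ 2)) - 1.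
Proof.
  intros h3 h32 h21 hk ha e2 e3 x.
  pose proof (part2 1 z2 z3 a k h3 h32 h21 hk ha ltac:(lra) ltac:(lra)) as p2.
  destruct (key2 k a ltac:(lra) ha) as [hs hm].
  pose proof (sn_cn k (2 * a)) as sc.
  assert (hz2 : z2 ^ 2 = 1 - k ^ 2 * sn k (2 * a) ^ 2).
  { rewrite e2. unfold dn. apply pow2_sqrt. left. apply pos_rad. lra. }
  assert (hk' : prof_k 1 z2 z3 = k).
  { unfold prof_k. replace ((1 ^ 2 - z2 ^ 2) / (1 ^ 2 - z3 ^ 2)) with (k ^ 2).
    - apply sqrt_pow2; lra.
    - rewrite hz2, e3. replace (1 ^ 2 - cn k (2 * a) ^ 2) with (sn k (2 * a) ^ 2) by lra.
      field. lra. }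
  assert (hnu : prof_nu 1 z3 = sn k (2 * a)).
  { unfold prof_nu. rewrite p2. ring. }
  unfold profile. rewrite hk', hnu. rewrite <- e2, <- e3. rewrite <- e2, <- e3 in hm.
  set (S := sn k (sn k (2 * a) * x)).
  set (m := k ^ 2 * sn k a ^ 2) in *.
  assert (hS : S ^ 2 <= 1).
  { pose proof (SIN_bound (am k (sn k (2 * a) * x))). change S with (sin (am k (sn k (2 * a) * x))). nra. }
  assert (hS0 : 0 <= S ^ 2) by nra.
  assert (hm0 : 0 <= m).
  { unfold m. apply Rmult_le_pos; apply pow2_ge_0. }
  assert (hm1 : m < 1) by nra.
  assert (0 < 1 - m * S ^ 2) by nra.
  replace (1 - z2) with (m * (1 + z3)) by lra.
  field. split; nra.
Qed.

Lemma dn_eq k p z1 z2 : 0 <= k < 1 -> 0 < z1 -> 0 < z2 ->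
  (z2 = z1 * sqrt (1 - k ^ 2 * sin p ^ 2) <-> k ^ 2 * sin p ^ 2 = 1 - (z2 / z1) ^ 2).
Proof.
  intros h h1 h2. pose proof (pos_rad k p h).
  pose proof (pow2_sqrt _ (Rlt_le _ _ H)). pose proof (sqrt_lt_R0 _ H).
  split.
  - intros e. replace (z2 / z1) with (sqrt (1 - k ^ 2 * sin p ^ 2)) by (rewrite e; field; lra). lra.
  - intros e. replace (1 - k ^ 2 * sin p ^ 2) with ((z2 / z1) ^ 2) by lra.
    rewrite sqrt_pow2. field; lra. apply Rlt_le, Rdiv_lt_0_compat; lra.
Qed.

Lemma part1 z1 z2 z3 : 0 < z3 -> z3 < z2 -> z2 < z1 ->
     exists a k : R,
       (0 < k < 1 /\ 0 < a < ellK k /\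
        z2 = z1 * dn k (2 * a) /\ z3 = z1 * cn k (2 * a)) /\
       (forall a' k' : R,
          0 < k' < 1 -> 0 < a' < ellK k' ->
          z2 = z1 * dn k' (2 * a') -> z3 = z1 * cn k' (2 * a') ->
          a' = a /\ k' = k).
Proof.
  intros h3 h32 h21.
  set (c0 := z3 / z1).
  assert (hc0 : 0 < c0 < 1).
  { unfold c0. split. apply Rdiv_lt_0_compat; lra. apply (Rmult_lt_reg_r z1); [lra|]. field_simplify; lra. }
  set (q := acos c0).
  assert (hq : 0 < q < PI) by (apply acos_bound_lt; lra).
  assert (hcq : cos q = c0) by (apply cos_acos; lra).
  assert (hq2 : q < PI / 2).
  { destruct (Rlt_or_le q (PI/2)) as [l|l]; auto.
    assert (cos q <= 0) by (apply cos_le_0; lra). lra. }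
  assert (hsq : 0 < sin q) by (apply sin_gt_0; lra).
  pose proof (sin2_cos2 q) as sc. unfold Rsqr in sc.
  set (r := (z1 ^ 2 - z2 ^ 2) / (z1 ^ 2 - z3 ^ 2)).
  assert (hr : 0 < r < 1).
  { unfold r. split. apply Rdiv_lt_0_compat; nra.
    apply (Rmult_lt_reg_r (z1 ^ 2 - z3 ^ 2)); [nra|]. field_simplify; nra. }
  set (k := sqrt r).
  assert (hk2 : k ^ 2 = r) by (apply pow2_sqrt; lra).
  assert (hk : 0 < k < 1).
  { split. apply sqrt_lt_R0; lra. assert (0 <= k) by apply sqrt_pos. nra. }
  assert (hkeq : k ^ 2 * sin q ^ 2 = 1 - (z2 / z1) ^ 2).
  { rewrite hk2. replace (sin q ^ 2) with (1 - c0 ^ 2) by nra. unfold r, c0. field. split; nra. }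
  set (a := ellF k q / 2).
  assert (hK : ellK k = ellF k (PI / 2)) by reflexivity.
  assert (ha : 0 < a < ellK k).
  { unfold a. rewrite hK. pose proof (ellF_incr k 0 q ltac:(lra) ltac:(lra)).
    pose proof (ellF_incr k q (PI/2) ltac:(lra) ltac:(lra)). rewrite ellF_0 in H. lra. }
  assert (ham : am k (2 * a) = q).
  { apply am_eq. lra. unfold a; field. unfold a. pose proof (ellF_nonneg k q ltac:(lra) ltac:(lra)). lra. }
  exists a, k. split.
  { split; auto. split; auto. split.
    - unfold dn, sn. rewrite ham. apply dn_eq; try lra. auto.
    - unfold cn. rewrite ham, hcq. unfold c0. field. lra. }
  intros a' k' hk' ha' e2 e3.
  destruct (key k' a' ltac:(lra) ha') as [_ [_ hq']].
  assert (hF : ellF k' (am k' (2 * a')) = 2 * a') by (apply am_spec; lra).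
  assert (hqq : am k' (2 * a') = q).
  { apply cos_inj; try lra. rewrite hcq. unfold c0. unfold cn in e3. rewrite e3. field. lra. }
  unfold dn, sn in e2. rewrite hqq in e2, hF.
  apply dn_eq in e2; try lra.
  assert (k' ^ 2 = k ^ 2).
  { apply (Rmult_eq_reg_r (sin q ^ 2)). lra. pose proof (pow_lt _ 2 hsq). lra. }
  assert (k' = k) by nra.
  split; auto. subst k'. unfold a. lra.
Qed.

Theorem corollary1 :
  (forall z1 z2 z3 : R, 0 < z3 -> z3 < z2 -> z2 < z1 ->
     exists a k : R,
       (0 < k < 1 /\ 0 < a < ellK k /\
        z2 = z1 * dn k (2 * a) /\ z3 = z1 * cn k (2 * a)) /\
       (forall a' k' : R,
          0 < k' < 1 -> 0 < a' < ellK k' ->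
          z2 = z1 * dn k' (2 * a') -> z3 = z1 * cn k' (2 * a') ->
          a' = a /\ k' = k)) /\
  (forall z1 z2 z3 a k : R, 0 < z3 -> z3 < z2 -> z2 < z1 ->
     0 < k < 1 -> 0 < a < ellK k ->
     z2 = z1 * dn k (2 * a) -> z3 = z1 * cn k (2 * a) ->
     sqrt (z1 ^ 2 - z3 ^ 2) = z1 * sn k (2 * a)) /\
  (forall z2 z3 a k : R, 0 < z3 -> z3 < z2 -> z2 < 1 ->
     0 < k < 1 -> 0 < a < ellK k ->
     z2 = dn k (2 * a) -> z3 = cn k (2 * a) ->
     forall x : R,
       profile 1 z2 z3 x =
       (dn k (2 * a) + cn k (2 * a)) *
         ((1 + k ^ 2 * (sn k a) ^ 2 * (sn k (sn k (2 * a) * x)) ^ 2) /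
          (1 - k ^ 2 * (sn k a) ^ 2 * (sn k (sn k (2 * a) * x)) ^ 2)) - 1).
Proof.
  split; [exact part1|split; [exact part2|exact part3]].
Qed.
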